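(* Let $\mathcal{L}_1,\mathcal{L}_2$ be objects of $\mathbf{Cal^0_{Sym}}$. Then $\mathcal{L}_1\circledast\mathcal{L}_2$ is a simple closure space on $\Sigma_1\times\Sigma_2$ (in particular a complete atomistic lattice whose atoms are the singletons), $\mathcal{L}_1\circledast\mathcal{L}_2$ is an object of $\mathbf{Cal^0_{Sym}}$, and the set of coatoms of $\mathcal{L}_1\circledast\mathcal{L}_2$ is exactly $\Sigma'_\circledast$.
   Context: A simple closure space on a nonempty set $\Sigma$ is a family $\mathcal{L}\subseteq 2^\Sigma$ containing $\emptyset$, $\Sigma$ and all singletons and closed under arbitrary intersections (ordered by inclusion). For a complete lattice $\mathcal{L}_i$: $\Sigma_i,\Sigma_i'$ are its sets of atoms and coatoms, $\Sigma[a]$ (resp. $\Sigma'[a]$) the atoms below (resp. coatoms above) $a$, and $\mathsf{Cl}(\omega)=\{\Sigma[a]\,;\,a\in\omega\}$. $\mathbf{Cal^0_{Sym}}$: objects are complete atomistic coatomistic lattices with $\Sigma[x]\cup\Sigma[y]\ne\Sigma$ for all coatoms $x,y$ and $\Sigma'[p]\cup\Sigma'[q]\ne\Sigma'$ for all atoms $p,q$. For $R\subseteq\Sigma_1\times\Sigma_2$, $p=(p_1,p_2)$: $R_1[p]:=\{q_1;(q_1,p_2)\in R\}$, $R_2[p]:=\{q_2;(p_1,q_2)\in R\}$. $\Sigma'_\circledast:=\{R\subsetneqq\Sigma_1\times\Sigma_2\,;\,R_1[p]\in\mathsf{Cl}(\Sigma_1'\cup\{1\}),\ R_2[p]\in\mathsf{Cl}(\Sigma_2'\cup\{1\})\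 \forall p\}$, and $\mathcal{L}_1\circledast\mathcal{L}_2:=\{\bigcap\omega\,;\,\omega\subseteq\Sigma'_\circledast\cup\{\Sigma_1\times\Sigma_2\}\}$ ordered by inclusion. *)

(* Defs.v *)
From mathcomp Require Import all_boot.
From mathcomp Require Import boolp classical_sets.
Set Implicit Arguments. Unset Strict Implicit. Unset Printing Implicit Defensive.
Local Open Scope classical_set_scope.

Section Poset.
Variables (T : Type) (le : T -> T -> Prop).

Definition is_partial_order : Prop :=
  [/\ (forall x, le x x),
      (forall x y, le x y -> le y x -> x = y) &
      (forall x y z, le x y -> le y z -> le x z)].

Definition is_lub (S : set T) (s : T) : Prop :=
  (forall x, S x -> le x s) /\ (forall u, (forall x, S x -> le x u) -> le s u).

Definition is_glb (S : set T) (s : T) : Prop :=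
  (forall x, S x -> le s x) /\ (forall u, (forall x, S x -> le u x) -> le u s).

Definition complete_lattice : Prop :=
  [/\ is_partial_order,
      (forall S : set T, exists s, is_lub S s) &
      (forall S : set T, exists s, is_glb S s)].

Definition is_bot (x : T) : Prop := forall y, le x y.
Definition is_top (x : T) : Prop := forall y, le y x.

Definition atom (a : T) : Prop :=
  ~ is_bot a /\ forall x, le x a -> is_bot x \/ x = a.
Definition coatom (a : T) : Prop :=
  ~ is_top a /\ forall x, le a x -> is_top x \/ x = a.

Definition atoms : set T := [set a | atom a].
Definition coatoms : set T := [set a | coatom a].

Definition atoms_below (a : T) : set T := [set p | atom p /\ le p a].
Definition coatoms_above (a : T) : set T := [set x | coatom x /\ le a x].

Definition atomistic : Prop := forall a, is_lub (atoms_below a) a.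
Definition coatomistic : Prop := forall a, is_glb (coatoms_above a) a.

Definition Cal0Sym : Prop :=
  [/\ complete_lattice, atomistic, coatomistic,
      (forall x y, coatom x -> coatom y ->
         atoms_below x `|` atoms_below y <> atoms) &
      (forall p q, atom p -> atom q ->
         coatoms_above p `|` coatoms_above q <> coatoms)].

Definition Cl_coatoms_top : set (set T) :=
  [set S | exists a, (coatom a \/ is_top a) /\ S = atoms_below a].

End Poset.

Definition simple_closure_space (X : Type) (U : set X) (F : set (set X)) : Prop :=
  [/\ (forall A, F A -> A `<=` U),
      F set0, F U,
      (forall x, U x -> F [set x]) &
      (forall G : set (set X), G `<=` F ->
         F [set p | U p /\ forall A, G A -> A p])].

Section Tensor.
Variables (T1 T2 : Type) (le1 : T1 -> T1 -> Prop) (le2 : T2 -> T2 -> Prop).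

Definition Sig12 : set (T1 * T2) := atoms le1 `*` atoms le2.

Definition R1 (R : set (T1 * T2)) (p : T1 * T2) : set T1 := [set q1 | R (q1, p.2)].
Definition R2 (R : set (T1 * T2)) (p : T1 * T2) : set T2 := [set q2 | R (p.1, q2)].

Definition tensor_coatoms : set (set (T1 * T2)) :=
  [set R | [/\ R `<=` Sig12, R <> Sig12 &
     forall p, Sig12 p ->
       Cl_coatoms_top le1 (R1 R p) /\ Cl_coatoms_top le2 (R2 R p)]].

(* L1 [*] L2 = { /\ omega ; omega subset of Sigma'_[*] u {Sigma1 x Sigma2} },
   the empty intersection being Sigma1 x Sigma2 *)
Definition tensor : set (set (T1 * T2)) :=
  [set X | exists omega : set (set (T1 * T2)),
     omega `<=` tensor_coatoms `|` [set Sig12] /\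
     X = [set p | Sig12 p /\ forall R, omega R -> R p]].

Definition tensor_carrier := {X : set (T1 * T2) | tensor X}.
Definition tensor_le (X Y : tensor_carrier) : Prop := proj1_sig X `<=` proj1_sig Y.

End Tensor.

(* Main.v *)
Require Import Defs.
From mathcomp Require Import all_boot.
From mathcomp Require Import boolp classical_sets.
From Stdlib Require Import Classical.
Set Implicit Arguments. Unset Strict Implicit.
Local Open Scope classical_set_scope.

Lemma seteq (T : Type) (A B : set T) : (forall x, A x <-> B x) -> A = B.
Proof. move=> h; apply: funext => x; apply: propext; exact: h. Qed.

Section L.
Variables (T : Type) (le : T -> T -> Prop) (H : Cal0Sym le).

Let po : is_partial_order le. Proof. by case: H => [[]]. Qed.
Let trans x y z : le x y -> le y z -> le x z. Proof. by case: po => _ _; apply. Qed.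
Let ato : atomistic le. Proof. by case: H. Qed.
Let coato : coatomistic le. Proof. by case: H. Qed.
Let c4 : forall x y, coatom le x -> coatom le y ->
         atoms_below le x `|` atoms_below le y <> atoms le. Proof. by case: H. Qed.
Let c5 : forall p q, atom le p -> atom le q ->
         coatoms_above le p `|` coatoms_above le q <> coatoms le. Proof. by case: H. Qed.

Lemma L_top : exists t, is_top le t.
Proof. case: H => [[_ lubs _] _ _ _ _]. have [s [hs _]] := lubs setT. by exists s => y; apply: hs. Qed.

Lemma L_bot : exists t, is_bot le t.
Proof. case: H => [[_ _ glbs] _ _ _ _]. have [s [hs _]] := glbs setT. by exists s => y; apply: hs. Qed.

Lemma atoms_below_top t : is_top le t -> atoms_below le t = atoms le.
Proof. move=> tt; apply: seteq => x; split; [by case | move=> ax; split; [exact: ax | exact: tt]]. Qed.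

Lemma cl_atoms : Cl_coatoms_top le (atoms le).
Proof. have [t tt] := L_top. exists t; split; first by right. by rewrite atoms_below_top. Qed.

Lemma K1 S S' : Cl_coatoms_top le S -> Cl_coatoms_top le S' -> S `<=` S' ->
  S' <> atoms le -> S = S'.
Proof.
case=> a [ha ->]; case=> b [hb ->] sub nf.
have hb' : coatom le b.
  by case: hb => // tb; exfalso; apply: nf; exact: atoms_below_top.
have lab : le a b.
  have [_ hub] := ato a; apply: hub => x hx; by case: (sub x hx).
case: ha => [[_ ca]|ta].
- case: (ca b lab) => [tb| ->] //. exfalso; case: hb' => nt _; exact: nt tb.
- exfalso; case: hb' => nt _; apply: nt => y; exact: (trans (ta y) lab).
Qed.

Lemma K2 S S' : Cl_coatoms_top le S -> Cl_coatoms_top le S' ->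
  S <> atoms le -> S' <> atoms le -> exists z, atom le z /\ ~ S z /\ ~ S' z.
Proof.
case=> a [ha ->]; case=> b [hb ->] na nb.
have ca : coatom le a.
  by case: ha => // ta; exfalso; apply: na; exact: atoms_below_top.
have cb : coatom le b.
  by case: hb => // ta; exfalso; apply: nb; exact: atoms_below_top.
apply: NNPP => nz. apply: (c4 ca cb). apply: seteq => x; split.
- by case=> [[]|[]].
- move=> ax. apply: NNPP => nu. apply: nz. exists x; split => //.
  by split => h; apply: nu; [left|right].
Qed.

Lemma atom_avoid p : atom le p -> exists c, coatom le c /\ ~ le p c.
Proof.
move=> pa. have [b hb] := L_bot. apply: NNPP => nc. case: pa => nbot _.
apply: nbot => y. have [_ hglb] := coato b.
have lpb : le p b.
  apply: hglb => x [cx _]. apply: NNPP => h; apply: nc; by exists x.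
exact: trans lpb (hb y).
Qed.

Lemma sep_two p q : atom le p -> atom le q -> p <> q ->
  exists c, coatom le c /\ le p c /\ ~ le q c.
Proof.
move=> pa qa pq. apply: NNPP => nc. have [_ hglb] := coato p.
have lqp : le q p.
  apply: hglb => x [cx lpx]. apply: NNPP => h; apply: nc; by exists x.
case: pa => _ hp. case: (hp q lqp) => [bq | eq]; first by case: qa.
by apply: pq; rewrite eq.
Qed.

Lemma c5use p q : atom le p -> atom le q ->
  exists c, coatom le c /\ ~ le p c /\ ~ le q c.
Proof.
move=> pa qa. apply: NNPP => nc. apply: (c5 pa qa). apply: seteq => x; split.
- by case=> [[]|[]].
- move=> cx. apply: NNPP => nu. apply: nc. exists x; split => //.
  by split => h; apply: nu; [left|right]; split.
Qed.

Lemma cl_or c (P : Prop) (S : set T) : coatom le c ->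
  (forall x, S x <-> atom le x /\ (le x c \/ P)) -> Cl_coatoms_top le S.
Proof.
move=> cc hS. case: (classic P) => hP.
- have -> : S = atoms le.
    apply: seteq => x; split; [by move/hS => [] | move=> ax; apply/hS; split => //; by right].
  exact: cl_atoms.
- exists c; split; first by left. apply: seteq => x; split.
  + by move/hS => [ax [lx|//]]; split.
  + by case=> ax lx; apply/hS; split => //; left.
Qed.

End L.
Section Ten.
Variables (T1 T2 : Type) (le1 : T1 -> T1 -> Prop) (le2 : T2 -> T2 -> Prop)
  (H1 : Cal0Sym le1) (H2 : Cal0Sym le2).

Definition prodR c1 c2 : set (T1 * T2) :=
  [set r | Sig12 le1 le2 r /\ (le1 r.1 c1 \/ le2 r.2 c2)].

Lemma prodR_tc c1 c2 p : coatom le1 c1 -> coatom le2 c2 -> Sig12 le1 le2 p ->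
  ~ le1 p.1 c1 -> ~ le2 p.2 c2 -> tensor_coatoms le1 le2 (prodR c1 c2).
Proof.
move=> cc1 cc2 sp n1 n2; split.
- by move=> r [].
- move=> E. have : prodR c1 c2 p by rewrite E. by case=> _ [].
- move=> q [q1a q2a]; split.
  + apply: (cl_or H1 (P := le2 q.2 c2) cc1) => x; rewrite /R1 /prodR /=.
    split; first by case=> [[ax _] h]; split.
    by case=> ax h; split.
  + apply: (cl_or H2 (P := le1 q.1 c1) cc2) => x; rewrite /R2 /prodR /=.
    split; first by case=> [[_ ax] h]; split => //; case: h; [right|left].
    by case=> ax h; split => //; case: h; [right|left].
Qed.

Definition sepP (X : set (T1 * T2)) := X `<=` Sig12 le1 le2 /\
  forall r, Sig12 le1 le2 r -> ~ X r ->
    exists R, tensor_coatoms le1 le2 R /\ X `<=` R /\ ~ R r.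

Lemma tensorE X : tensor le1 le2 X <-> sepP X.
Proof.
split.
- case=> om [hom ->]; split; first by move=> r [].
  move=> r sr nr.
  have : ~ forall R, om R -> R r by move=> h; apply: nr; split.
  move/not_all_ex_not => [R hR].
  have omR : om R by apply: NNPP => h; apply: hR => /h [].
  have nRr : ~ R r by move=> h; apply: hR.
  exists R; split; last split.
  + case: (hom R omR) => // eR. exfalso; apply: nRr. by rewrite eR.
  + move=> x [_ h]; exact: h R omR.
  + exact: nRr.
- case=> sub hs. exists [set R | tensor_coatoms le1 le2 R /\ X `<=` R]; split.
  + by move=> R [tR _]; left.
  + apply: seteq => x; split.
    * move=> Xx; split; first exact: sub.
      by move=> R [_ XR]; apply: XR.
    * case=> sx hx. apply: NNPP => nx. have [R [tR [XR nR]]] := hs x sx nx.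
      apply: nR; exact: hx R (conj tR XR).
Qed.

Lemma ten_sub X : tensor le1 le2 X -> X `<=` Sig12 le1 le2.
Proof. by move=> /tensorE []. Qed.

Lemma ten_tc R : tensor_coatoms le1 le2 R -> tensor le1 le2 R.
Proof.
move=> tR; apply/tensorE; split; first by case: tR.
by move=> r _ nr; exists R; split; [exact: tR | split].
Qed.

Lemma ten_Sig : tensor le1 le2 (Sig12 le1 le2).
Proof. by apply/tensorE; split => // r. Qed.

Lemma ten_empty : tensor le1 le2 set0.
Proof.
apply/tensorE; split => // -[r1 r2] [a1 a2] _.
have [c1 [cc1 n1]] := atom_avoid H1 a1.
have [c2 [cc2 n2]] := atom_avoid H2 a2.
exists (prodR c1 c2); split; first exact: (@prodR_tc c1 c2 (r1, r2)).
split => //. by case=> _ [].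
Qed.

Lemma ten_single p : Sig12 le1 le2 p -> tensor le1 le2 [set p].
Proof.
move=> sp; apply/tensorE; split; first by move=> x ->.
move=> r sr nrp. case: sp => [pa1 pa2]; case: sr => [ra1 ra2].
case: (classic (r.1 = p.1)) => e1.
- have e2 : p.2 <> r.2.
    move=> e2; apply: nrp. case: r p e1 e2 {pa1 pa2 ra1 ra2} => ? ? [? ?] /= -> ->. by [].
  have [c2 [cc2 [l2 n2]]] := sep_two H2 pa2 ra2 e2.
  have [c1 [cc1 n1]] := atom_avoid H1 ra1.
  exists (prodR c1 c2); split; first exact: (@prodR_tc c1 c2 r).
  split; first by move=> x ->; split; [split|right].
  by case=> _ [].
- have e1' : p.1 <> r.1 by move=> e; apply: e1.
  have [c1 [cc1 [l1 n1]]] := sep_two H1 pa1 ra1 e1'.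
  have [c2 [cc2 n2]] := atom_avoid H2 ra2.
  exists (prodR c1 c2); split; first exact: (@prodR_tc c1 c2 r).
  split; first by move=> x ->; split; [split|left].
  by case=> _ [].
Qed.

Lemma ten_inter (G : set (set (T1 * T2))) : G `<=` tensor le1 le2 ->
  tensor le1 le2 [set p | Sig12 le1 le2 p /\ forall A, G A -> A p].
Proof.
move=> hG; apply/tensorE; split; first by move=> r [].
move=> r sr nr.
have : ~ forall A, G A -> A r by move=> h; apply: nr; split.
move/not_all_ex_not => [A hA].
have GA : G A by apply: NNPP => h; apply: hA => /h [].
have nAr : ~ A r by move=> h; apply: hA.
have [_ hs] := (tensorE A).1 (hG A GA).
have [R [tR [AR nR]]] := hs r sr nAr.
exists R; split => //; split => //.
move=> x [_ h]; apply: AR; exact: h A GA.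
Qed.

Lemma inc R R' : tensor_coatoms le1 le2 R -> tensor_coatoms le1 le2 R' ->
  R `<=` R' -> R = R'.
Proof.
move=> [sR nR hR] [sR' nR' hR'] RR'.
apply: seteq => r; split; first exact: RR'.
move=> R'r; apply: NNPP => nRr.
case: r R'r nRr => x y R'xy nRxy.
have [xa ya] := sR' _ R'xy.
have [[u v] [[ua va] nR'uv]] : exists r, Sig12 le1 le2 r /\ ~ R' r.
  apply: NNPP => h; apply: nR'; apply: seteq => r; split; first exact: sR'.
  move=> sr; apply: NNPP => nr; apply: h; by exists r.
have [clRy _] := hR (x,y) (conj xa ya).
have [clR'y _] := hR' (x,y) (conj xa ya).
have [clRv _] := hR (u,v) (conj ua va).
have [clR'v _] := hR' (u,v) (conj ua va).
have fullR'y : R1 R' (x,y) = atoms le1.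
  apply: NNPP => nf.
  have E := K1 H1 clRy clR'y (fun q h => RR' _ h) nf.
  apply: nRxy. have : R1 R' (x,y) x by exact: R'xy.
  by rewrite -E.
have nfR'v : R1 R' (u,v) <> atoms le1.
  move=> E; apply: nR'uv. have : atoms le1 u by exact: ua.
  by rewrite -E.
have eqv := K1 H1 clRv clR'v (fun q h => RR' _ h) nfR'v.
have nfRy : R1 R (x,y) <> atoms le1.
  move=> E; apply: nRxy. have : atoms le1 x by exact: xa.
  by rewrite -E.
have nfRv : R1 R (u,v) <> atoms le1 by rewrite eqv.
have [z [za [nzy nzv]]] := K2 H1 clRy clRv nfRy nfRv.
have [_ clCz] := hR (z,y) (conj za ya).
have [_ clC'z] := hR' (z,y) (conj za ya).
have fullC' : R2 R' (z,y) = atoms le2.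
  apply: NNPP => nf.
  have E := K1 H2 clCz clC'z (fun q h => RR' _ h) nf.
  apply: nzy.
  have : R2 R' (z,y) y.
    have : R1 R' (x,y) z by rewrite fullR'y.
    by [].
  by rewrite -E.
have : R2 R' (z,y) v by rewrite fullC'.
move=> h. apply: nzv. rewrite eqv. exact: h.
Qed.

Lemma uni R R' : tensor_coatoms le1 le2 R -> tensor_coatoms le1 le2 R' ->
  (forall r, Sig12 le1 le2 r -> R r \/ R' r) -> False.
Proof.
move=> [sR nR hR] [sR' nR' hR'] cov.
have [[u v] [[ua va] nRuv]] : exists r, Sig12 le1 le2 r /\ ~ R r.
  apply: NNPP => h; apply: nR; apply: seteq => r; split; first exact: sR.
  move=> sr; apply: NNPP => nr; apply: h; by exists r.
have [[u' v'] [[ua' va'] nR'uv']] : exists r, Sig12 le1 le2 r /\ ~ R' r.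
  apply: NNPP => h; apply: nR'; apply: seteq => r; split; first exact: sR'.
  move=> sr; apply: NNPP => nr; apply: h; by exists r.
have [clRv _] := hR (u,v) (conj ua va).
have [clR'v _] := hR' (u',v') (conj ua' va').
have nf : R1 R (u,v) <> atoms le1.
  move=> E; apply: nRuv. have : atoms le1 u by exact: ua.
  by rewrite -E.
have nf' : R1 R' (u',v') <> atoms le1.
  move=> E; apply: nR'uv'. have : atoms le1 u' by exact: ua'.
  by rewrite -E.
have [z [za [nz nz']]] := K2 H1 clRv clR'v nf nf'.
have [_ clC] := hR (z,v) (conj za va).
have [_ clC'] := hR' (z,v') (conj za va').
have nfc : R2 R (z,v) <> atoms le2.
  move=> E; apply: nz. have : atoms le2 v by exact: va.
  by rewrite -E.
have nfc' : R2 R' (z,v') <> atoms le2.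
  move=> E; apply: nz'. have : atoms le2 v' by exact: va'.
  by rewrite -E.
have [w [wa [nw nw']]] := K2 H2 clC clC' nfc nfc'.
by case: (cov (z,w) (conj za wa)).
Qed.

Local Notation C := (tensor_carrier le1 le2).
Local Notation tle := (@tensor_le _ _ le1 le2).

Lemma sig_eq (X Y : C) : proj1_sig X = proj1_sig Y -> X = Y.
Proof. move: X Y => [X hX] [Y hY] /= E; subst Y; congr exist; exact: Prop_irrelevance. Qed.

Definition topC : C := exist _ _ ten_Sig.
Definition botC : C := exist _ _ ten_empty.

Lemma topE (X : C) : is_top tle X <-> proj1_sig X = Sig12 le1 le2.
Proof.
split.
- move=> h. have := h topC; rewrite /tensor_le /= => s.
  apply: seteq => x; split; [move=> hx; exact: ten_sub (proj2_sig X) _ hx | exact: s].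
- move=> E Y; rewrite /tensor_le E; exact: ten_sub (proj2_sig Y).
Qed.

Lemma botE (X : C) : is_bot tle X <-> proj1_sig X = set0.
Proof.
split.
- move=> h. have := h botC; rewrite /tensor_le /= => s.
  by apply: seteq => x; split => // /s.
- by move=> E Y; rewrite /tensor_le E.
Qed.

Lemma poC : is_partial_order tle.
Proof.
split.
- by move=> x.
- move=> x y a b; apply: sig_eq; apply: seteq => z; split; [exact: a | exact: b].
- by move=> x y z a b t /a /b.
Qed.

Lemma glbC (S : set C) : exists s, is_glb tle S s.
Proof.
pose G := [set A | exists X, S X /\ A = proj1_sig X].
have hG : G `<=` tensor le1 le2 by move=> A [X [_ ->]]; exact: proj2_sig X.
exists (exist _ _ (ten_inter hG)); split.
- move=> X SX p [_ h] /=. apply: h; by exists X.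
- move=> u hu p up /=. split; first exact: (ten_sub (proj2_sig u) up).
  move=> A [X [SX ->]]; exact: hu X SX p up.
Qed.

Lemma lubC (S : set C) : exists s, is_lub tle S s.
Proof.
have [s [hs1 hs2]] := glbC [set u | forall x, S x -> tle x u].
exists s; split.
- move=> x Sx; apply: hs2 => u hu; exact: hu x Sx.
- move=> u hu; exact: hs1 u hu.
Qed.

Definition single p (sp : Sig12 le1 le2 p) : C := exist _ _ (ten_single sp).

Lemma atomC (X : C) : atom tle X <-> exists p, Sig12 le1 le2 p /\ proj1_sig X = [set p].
Proof.
split.
- move=> [nb h].
  have [p Xp] : exists p, proj1_sig X p.
    apply: NNPP => ne; apply: nb; apply/botE; apply: seteq => x; split => // Xx.
    by apply: ne; exists x.
  have sp := ten_sub (proj2_sig X) Xp.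
  case: (h (single sp)).
  + by move=> x /= ->.
  + move/botE => /= E. have : [set p] p by []. by rewrite E.
  + move=> E; exists p; split => //. by rewrite -E.
- move=> [p [sp E]]; split.
  + move/botE; rewrite E => E'. have : [set p] p by []. by rewrite E'.
  + move=> Y YX. case: (classic (exists q, proj1_sig Y q)) => [[q Yq] | ne].
    * right; apply: sig_eq; apply: seteq => x; split; first exact: YX.
      rewrite E => ->. have := YX q Yq; rewrite E => eq. by rewrite -eq.
    * left; apply/botE; apply: seteq => x; split => // Yx; apply: ne; by exists x.
Qed.

Lemma atomisticC : atomistic tle.
Proof.
move=> X; split; first by move=> Y [].
move=> u hu p Xp. have sp := ten_sub (proj2_sig X) Xp.
have : atoms_below tle X (single sp).
  split; first by apply/atomC; exists p.
  by move=> x /= ->.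
move/hu; apply; by [].
Qed.

Lemma coatomC (X : C) : coatom tle X <-> tensor_coatoms le1 le2 (proj1_sig X).
Proof.
split.
- move=> [nt h].
  have nS : proj1_sig X <> Sig12 le1 le2 by move=> E; apply: nt; apply/topE.
  have [r [sr nr]] : exists r, Sig12 le1 le2 r /\ ~ proj1_sig X r.
    apply: NNPP => hh; apply: nS; apply: seteq => r; split.
    * move=> hx; exact: ten_sub (proj2_sig X) _ hx.
    * move=> sr; apply: NNPP => nr; apply: hh; by exists r.
  have [_ hs] := (tensorE (proj1_sig X)).1 (proj2_sig X).
  have [R [tR [XR nRr]]] := hs r sr nr.
  case: (h (exist _ _ (ten_tc tR)) XR).
  + move/topE => /= E. by case: tR => _ + _; rewrite E.
  + by move=> <-.
- move=> tX; split.
  + move/topE => E. by case: tX => _ + _; rewrite E.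
  + move=> Y XY. case: (classic (proj1_sig Y = Sig12 le1 le2)) => [e|ne].
    * by left; apply/topE.
    * right.
      have [r [sr nr]] : exists r, Sig12 le1 le2 r /\ ~ proj1_sig Y r.
        apply: NNPP => hh; apply: ne; apply: seteq => r; split.
        -- move=> hx; exact: ten_sub (proj2_sig Y) _ hx.
        -- move=> sr; apply: NNPP => nr; apply: hh; by exists r.
      have [_ hs] := (tensorE (proj1_sig Y)).1 (proj2_sig Y).
      have [R [tR [YR nRr]]] := hs r sr nr.
      have E := inc tX tR (fun x h => YR x (XY x h)).
      apply: sig_eq; apply: seteq => x; split; last exact: XY.
      by move=> /YR; rewrite -E.
Qed.

Lemma coatomisticC : coatomistic tle.
Proof.
move=> X; split; first by move=> Y [].
move=> u hu r ur. apply: NNPP => nr.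
have sr := ten_sub (proj2_sig u) ur.
have [_ hs] := (tensorE (proj1_sig X)).1 (proj2_sig X).
have [R [tR [XR nRr]]] := hs r sr nr.
have cR : coatom tle (exist _ _ (ten_tc tR)) by apply/coatomC.
apply: nRr. exact: (hu _ (conj cR XR) r ur).
Qed.

Lemma cal0C : Cal0Sym tle.
Proof.
split.
- split; [exact: poC | exact: lubC | exact: glbC].
- exact: atomisticC.
- exact: coatomisticC.
- move=> x y /coatomC cx /coatomC cy E.
  apply: (uni cx cy) => r sr.
  have : atoms tle (single sr) by apply/atomC; exists r.
  rewrite -E. case=> [[_ h]|[_ h]]; [left|right]; exact: h r (erefl r).
- move=> p q /atomC [p0 [sp Ep]] /atomC [q0 [sq Eq]] E.
  have [pa1 pa2] := sp. have [qa1 qa2] := sq.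
  have [c1 [cc1 [n1 m1]]] := c5use H1 pa1 qa1.
  have [c2 [cc2 [n2 m2]]] := c5use H2 pa2 qa2.
  have tR := prodR_tc cc1 cc2 sp n1 n2.
  have cR : coatom tle (exist _ _ (ten_tc tR)) by apply/coatomC.
  have : coatoms tle (exist _ _ (ten_tc tR)) by exact: cR.
  rewrite -E. case=> [[_ h]|[_ h]].
  + have : proj1_sig p p0 by rewrite Ep.
    by move/h => [_ [|]].
  + have : proj1_sig q q0 by rewrite Eq.
    by move/h => [_ [|]].
Qed.
End Ten.
Theorem lemma4p3 (T1 T2 : Type) (le1 : T1 -> T1 -> Prop) (le2 : T2 -> T2 -> Prop)
  (H1 : Cal0Sym le1) (H2 : Cal0Sym le2) :
  [/\ simple_closure_space (Sig12 le1 le2) (tensor le1 le2),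
      (* in particular: a complete atomistic lattice whose atoms are the singletons *)
      complete_lattice (@tensor_le _ _ le1 le2) /\
      atomistic (@tensor_le _ _ le1 le2),
      (forall X : tensor_carrier le1 le2,
         atom (@tensor_le _ _ le1 le2) X <->
         exists p, Sig12 le1 le2 p /\ proj1_sig X = [set p]),
      Cal0Sym (@tensor_le _ _ le1 le2) &
      (* the coatoms are exactly Sigma'_[*] *)
      (forall R, tensor_coatoms le1 le2 R -> tensor le1 le2 R) /\
      (forall X : tensor_carrier le1 le2,
         coatom (@tensor_le _ _ le1 le2) X <-> tensor_coatoms le1 le2 (proj1_sig X))].
Proof.
split.
- split.
  + move=> A hA; exact: ten_sub hA.
  + exact: ten_empty H1 H2.
  + exact: ten_Sig.
  + move=> x sx; exact: (ten_single H1 H2 sx).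
  + move=> G hG; exact: ten_inter hG.
- split; first split.
  + exact: poC.
  + exact: lubC.
  + exact: glbC.
  + exact: atomisticC.
- move=> X; exact: atomC H1 H2 X.
- exact: cal0C H1 H2.
- split; [move=> R; exact: ten_tc | move=> X; exact: coatomC H1 H2 X].
Qed.
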